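(* For every integer $T>0$ and real $\lambda>0$: (i) with $r=\sqrt{(T+1)n}$ and $n\ge r^2/\lambda^2$, $\mathsf{VC}\text{-}\mathsf{dim}\big(\mathbb{H}_{r,\lambda}(\mathcal{E}_{\mathsf{WLOA}}(n,d_T))\big)\in\Theta(r^2/\lambda^2)$; (ii) with $r=\sqrt{T/(T+1)}$ and $n\ge r^2/\lambda^2$, $\mathsf{VC}\text{-}\mathsf{dim}\big(\mathbb{H}_{1,\lambda}(\overline{\mathcal{E}}_{\mathsf{WLOA}}(n,d_T))\big)\in\Theta(1/\lambda^2)$.
   Context: $\mathcal{G}_n$ is the set of (unlabeled, simple, undirected) graphs on $n$ vertices. $1$-WL colouring: $C^1_0$ constant, $C^1_t(v)=\mathsf{RELABEL}(C^1_{t-1}(v),\{\!\{C^1_{t-1}(u):u\in N(v)\}\!\})$ with a fixed injective $\mathsf{RELABEL}$ shared by all graphs; $\Sigma_t$ is the set of colours at round $t$ over all of $\mathcal{G}_n$ and $\phi_t(G)_c$ is the number of vertices of $G$ with colour $c$ at round $t$. The Weisfeiler–Leman optimal assignment feature map $\phi^{(T)}_{\mathsf{WLOA}}(G)\in\{0,1\}^{d_T}$ has one coordinate for each triple $(t,c,j)$ with $t\in\{0,\dots,T\}$, $c\in\Sigma_t$, $j\in\{1,\dots,n\}$, equal to $1$ if $\phi_t(G)_c\ge j$ and $0$ otherwise (so $\langle\phi^{(T)}_{\mathsf{WLOA}}(G),\phi^{(T)}_{\mathsf{WLOA}}(H)\rangle=\sum_{t=0}^T\sum_{c\in\Sigma_t}\min(\phi_t(G)_c,\phi_t(H)_c)$).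 $\overline{\phi^{(T)}_{\mathsf{WLOA}}}$ is its normalisation to unit Euclidean norm; $\mathcal{E}_{\mathsf{WLOA}}(n,d_T)=\{\phi^{(T)}_{\mathsf{WLOA}}\}$, $\overline{\mathcal{E}}_{\mathsf{WLOA}}(n,d_T)=\{\overline{\phi^{(T)}_{\mathsf{WLOA}}}\}$. A sample $(\mathbf{x}_i,y_i)\subset\mathbb{R}^d\times\{0,1\}$ is $(r,\lambda)$-separable if the points lie in a ball of radius $r$ and the distance between the convex hulls of the two classes is at least $2\lambda$. $\mathbb{H}_{r,\lambda}(\mathcal{E})$ is the set of partial concepts $h:\mathcal{G}_n\to\{0,1,\star\}$ such that every finite list of graphs with $h\neq\star$, labelled by $h$ and embedded by some $\mathrm{emb}\in\mathcal{E}$, is $(r,\lambda)$-separable. VC dimension: largest size of a set shattered by the class (every $0/1$ pattern realised). *)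

(* Defs.v *)
From HB Require Import structures.
From mathcomp Require Import all_boot all_order all_algebra fingroup perm.
From mathcomp Require Import boolp reals.
Set Implicit Arguments. Unset Strict Implicit. Unset Printing Implicit Defensive.
Import Order.TTheory GRing.Theory Num.Theory.

Definition lgraph (n : nat) := {ffun 'I_n * 'I_n -> bool}.

Definition simple_graphb n (g : lgraph n) : bool :=
  [forall u, ~~ g (u, u)] && [forall u, forall v, g (u, v) == g (v, u)].

Definition sgraph (n : nat) := {g : lgraph n | simple_graphb g}.

Definition adj n (g : sgraph n) (u v : 'I_n) : bool := val g (u, v).

Definition isob n (g h : sgraph n) : bool :=
  [exists p : {perm 'I_n}, [forall u, forall v, adj g u v == adj h (p u) (p v)]].

Definition isoclass n (g : sgraph n) : {set sgraph n} := [set h | isob g h].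

(* G_n : unlabelled graphs on n vertices = isomorphism classes *)
Definition Gn (n : nat) := {A : {set sgraph n} | [exists g, A == isoclass g]}.

Definition rep n (G : Gn n) : sgraph n := xchoose (existsP (valP G)).

(* Vertices of all graphs: pairs (g, v).  wl_eq t x y holds iff x and y get the
   same 1-WL colour at round t (RELABEL injective: same previous colour and same
   multiset of neighbour colours). *)
Fixpoint wl_eq n (t : nat) (x y : sgraph n * 'I_n) {struct t} : bool :=
  match t with
  | 0 => true
  | t'.+1 =>
      wl_eq t' x y &&
      [forall z : sgraph n * 'I_n,
         #|[set u | adj x.1 x.2 u & wl_eq t' (x.1, u) z]|
         == #|[set u | adj y.1 y.2 u & wl_eq t' (y.1, u) z]|]
  end.

(* the colour of a vertex at round t, canonically represented by its colour class *)
Definition wlcol n (t : nat) (x : sgraph n * 'I_n) : {set sgraph n * 'I_n} :=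
  [set y | wl_eq t x y].

Definition Sigma n (t : nat) : {set {set sgraph n * 'I_n}} :=
  [set wlcol t x | x : sgraph n * 'I_n].

Definition wlcount n (t : nat) (g : sgraph n) (c : {set sgraph n * 'I_n}) : nat :=
  #|[set v | wlcol t (g, v) == c]|.

(* coordinates (t, c, j), t in {0..T}, c in Sigma_t, j in {1..n} (j = k.+1, k : 'I_n) *)
Definition wloa_index (n T : nat) :=
  {x : 'I_T.+1 * {set sgraph n * 'I_n} * 'I_n | x.1.2 \in Sigma n x.1.1}.

Definition phi_wloa (R : realType) (n T : nat) (G : Gn n) : wloa_index n T -> R :=
  fun i => let: (t, c, k) := val i in
           if (k.+1 <= wlcount t (rep G) c)%N then 1%R else 0%R.

Definition sqnorm (R : realType) (I : finType) (x : I -> R) : R :=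
  (\sum_(i : I) x i ^+ 2)%R.
Definition enorm (R : realType) (I : finType) (x : I -> R) : R := Num.sqrt (sqnorm x).
Definition edist (R : realType) (I : finType) (x y : I -> R) : R :=
  enorm (fun i => (x i - y i)%R).

Definition phi_wloa_norm (R : realType) (n T : nat) (G : Gn n) : wloa_index n T -> R :=
  fun i => (@phi_wloa R n T G i / enorm (@phi_wloa R n T G))%R.

Definition E_WLOA (R : realType) (n T : nat) : (Gn n -> wloa_index n T -> R) -> Prop :=
  fun emb => emb = @phi_wloa R n T.
Definition Ebar_WLOA (R : realType) (n T : nat) : (Gn n -> wloa_index n T -> R) -> Prop :=
  fun emb => emb = @phi_wloa_norm R n T.

Definition in_hull (R : realType) (I : finType) (xs : seq (I -> R)) (y : I -> R) : Prop :=
  exists w : 'I_(size xs) -> R,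
    (forall k, 0 <= w k)%R /\ (\sum_k w k = 1)%R /\
    forall i, y i = (\sum_k w k * (nth (fun _ => 0%R) xs k) i)%R.

Definition separable (R : realType) (I : finType) (r lam : R)
    (s : seq ((I -> R) * bool)) : Prop :=
  (exists c : I -> R, forall p, p \in s -> (edist p.1 c <= r)%R) /\
  forall y0 y1,
    in_hull [seq p.1 | p <- s & ~~ p.2] y0 ->
    in_hull [seq p.1 | p <- s & p.2] y1 ->
    (2 * lam <= edist y0 y1)%R.

(* H_{r,lambda}(E): partial concepts (None = star) *)
Definition Hclass (R : realType) (X I : finType) (E : (X -> I -> R) -> Prop)
    (r lam : R) (h : X -> option bool) : Prop :=
  forall s : seq X, (forall x, x \in s -> h x != None) ->
    exists emb, E emb /\ separable r lam [seq (emb x, odflt false (h x)) | x <- s].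

Definition shattered (X : finType) (C : (X -> option bool) -> Prop) (S : {set X}) : Prop :=
  forall f : X -> bool, exists h, C h /\ forall x, x \in S -> h x = Some (f x).

Definition VCdim (X : finType) (C : (X -> option bool) -> Prop) : nat :=
  \max_(S : {set X} | `[< shattered C S >]) #|S|.

(* Main.v *)
Require Import Defs.
From HB Require Import structures.
From mathcomp Require Import all_boot all_order all_algebra fingroup perm.
From mathcomp Require Import boolp reals.
From mathcomp Require Import zify ring lra.
Import Order.TTheory GRing.Theory Num.Theory.
Set Implicit Arguments. Unset Strict Implicit. Unset Printing Implicit Defensive.

Section WL.
Variable n : nat.
Implicit Types x y z : sgraph n * 'I_n.

Lemma wl_refl t x : wl_eq t x x.
Proof. by elim: t => [|t IH] //=; rewrite IH; apply/forallP => z. Qed.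

Lemma wl_sym t x y : wl_eq t x y = wl_eq t y x.
Proof.
elim: t => [|t IH] //=; rewrite IH; congr andb.
by apply: eq_forallb => z; rewrite eq_sym.
Qed.

Lemma wl_trans t x y z : wl_eq t x y -> wl_eq t y z -> wl_eq t x z.
Proof.
elim: t x y z => [|t IH] x y z //= /andP[H1 /forallP H2] /andP[H3 /forallP H4].
rewrite (IH _ _ _ H1 H3); apply/forallP => w.
by rewrite (eqP (H2 w)) (H4 w).
Qed.

Lemma wl_down t x y : wl_eq t.+1 x y -> wl_eq t x y.
Proof. by case/andP. Qed.

Lemma wl_one t x y : (0 < t)%N -> wl_eq t x y -> wl_eq 1 x y.
Proof.
elim: t => [|t IH] // _; case: t IH => [|t] IH; first by [].
by move=> H; apply: IH => //; apply: wl_down.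
Qed.

Lemma wl_iso (g h : sgraph n) (p : {perm 'I_n}) :
  (forall u v, adj g u v = adj h (p u) (p v)) ->
  forall t v, wl_eq t (g, v) (h, p v).
Proof.
move=> Hp; elim => [|t IH] v //=; rewrite IH /=; apply/forallP => z.

set B := [set u | adj h (p v) u & wl_eq t (h, u) z].
have -> : [set u | adj g v u & wl_eq t (g, u) z] = p @^-1: B.
  apply/setP => u; rewrite !inE -Hp; congr andb.
  apply/idP/idP => H.
    by apply: wl_trans H; rewrite wl_sym.
  exact: wl_trans (IH u) H.
by rewrite card_preimset //; apply: perm_inj.
Qed.

Lemma wlcol_eq t x y : wl_eq t x y -> wlcol t x = wlcol t y.
Proof.
move=> H; apply/setP => w; rewrite !inE; apply/idP/idP => H'.
  by apply: wl_trans H'; rewrite wl_sym.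
exact: wl_trans H H'.
Qed.

Lemma wl_deg x y : wl_eq 1 x y ->
  #|[set u | adj x.1 x.2 u]| = #|[set u | adj y.1 y.2 u]|.
Proof.
case/andP => _ /forallP /(_ x) /eqP.
have E : forall w : sgraph n * 'I_n, [set u | adj w.1 w.2 u & true] = [set u | adj w.1 w.2 u].
  by move=> w; apply/setP => u; rewrite !inE andbT.
by rewrite !E.
Qed.
End WL.

Definition cdist (i j : nat) := ((i - j) + (j - i))%N.
Definition circ_adjb n (a : nat) (u v : 'I_n) : bool :=
  (nat_of_ord u != nat_of_ord v) && ((cdist u v <= a) || (n - cdist u v <= a))%N.
Definition circ_lg n a : lgraph n := [ffun p => circ_adjb a p.1 p.2].
Lemma circ_simple n a : simple_graphb (circ_lg n a).
Proof.
apply/andP; split.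
  by apply/forallP => u; rewrite ffunE /circ_adjb eqxx.
apply/forallP => u; apply/forallP => v; rewrite !ffunE /circ_adjb /cdist /=.
apply/eqP; congr andb; first by rewrite eq_sym.
by rewrite addnC.
Qed.
Definition circ n a : sgraph n := exist _ (circ_lg n a) (circ_simple n a).

Lemma adj_circ n a u v : adj (circ n a) u v = circ_adjb a u v.
Proof. by rewrite /adj /= ffunE. Qed.


Definition rot n : {perm 'I_n} := perm (@ordS_inj n).

Lemma rot_val n (u : 'I_n) : val (rot n u) = if (u.+1 < n)%N then u.+1 else 0%N.
Proof.
rewrite permE /=; case: ifP => H; first by rewrite modn_small.
have -> : u.+1 = n by apply/eqP; rewrite eqn_leq ltn_ord leqNgt H.
by rewrite modnn.
Qed.

Lemma rot_aut n a u v : adj (circ n a) u v = adj (circ n a) (rot n u) (rot n v).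
Proof.
rewrite !adj_circ /circ_adjb !rot_val /cdist.
have := ltn_ord u; have := ltn_ord v.
case: ifP => Hu; case: ifP => Hv => *; lia.
Qed.

Lemma iter_rot n j : (j < n.+1)%N -> val (iter j (rot n.+1) ord0) = j.
Proof.
elim: j => [|j IH] //= Hj; rewrite rot_val IH ?(ltnW Hj) //.
by rewrite Hj.
Qed.

Lemma circ_trans n a t (v : 'I_n.+1) : wl_eq t (circ n.+1 a, ord0) (circ n.+1 a, v).
Proof.
have H : forall j, wl_eq t (circ n.+1 a, ord0) (circ n.+1 a, iter j (rot n.+1) ord0).
  elim => [|j IH]; first exact: wl_refl.
  apply: wl_trans IH _ => /=; apply: wl_iso; exact: rot_aut.
have -> : v = iter v (rot n.+1) ord0 by apply/val_inj; rewrite iter_rot.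
exact: H.
Qed.

Lemma circ_deg_lt n a b : (a < b)%N -> (a + b < n.+1)%N ->
  (#|[set u | adj (circ n.+1 a) ord0 u]| < #|[set u | adj (circ n.+1 b) ord0 u]|)%N.
Proof.
move=> Hab Hn; apply: proper_card; apply/properP; split.
  apply/subsetP => u; rewrite !inE !adj_circ /circ_adjb /cdist /= => *; lia.
have Hb : (b < n.+1)%N by lia.
exists (Ordinal Hb); rewrite !inE !adj_circ /circ_adjb /cdist /=; lia.
Qed.

Section Count.
Variable R : realType.
Variables (n T : nat).
Local Open Scope ring_scope.

Lemma sum_wloa (F : 'I_T.+1 * {set sgraph n * 'I_n} * 'I_n -> R) :
  \sum_(i : wloa_index n T) F (val i) =
  \sum_(x : 'I_T.+1 * {set sgraph n * 'I_n} * 'I_n | x.1.2 \in Sigma n x.1.1) F x.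
Proof.
have := big_sub_cond [pred x : 'I_T.+1 * {set sgraph n * 'I_n} * 'I_n | x.1.2 \in Sigma n x.1.1] xpredT F.
move=> H; have := H 0 +%R; rewrite big_mkcondr /= => <-.
by apply: eq_bigl => x; rewrite inE.
Qed.

Lemma count_col (col : 'I_T.+1 -> {set sgraph n * 'I_n}) (P : pred 'I_T.+1) :
  (forall t, col t \in Sigma n t) ->
  \sum_(i : wloa_index n T)
     (if P (val i).1.1 && ((val i).1.2 == col (val i).1.1) then 1 else 0 : R)
  = (#|P| * n)%:R.
Proof.
move=> Hcol; rewrite (sum_wloa (fun x => if P x.1.1 && (x.1.2 == col x.1.1) then 1 else 0)).
rewrite big_mkcond /=.
rewrite (eq_bigr (fun x => if P x.1.1 && (x.1.2 == col x.1.1) then 1 else 0)); last first.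
  move=> x _; case: ifP => //; case: ifP => // /andP[_ /eqP ->].
  by rewrite Hcol.
rewrite -(pair_bigA _ (fun p k => if P p.1 && (p.2 == col p.1) then 1 else 0)) /=.
rewrite -(pair_bigA _ (fun t c => \sum_(k : 'I_n) if P t && (c == col t) then 1 else 0)) /=.
rewrite (eq_bigr (fun t => if P t then n%:R else 0)); last first.
  move=> t _; rewrite (bigD1 (col t)) //= eqxx andbT [X in _ + X]big1; last first.
    move=> c /negPf ->; rewrite andbF; exact: big1.
  case: (P t); rewrite addr0; first by rewrite sumr_const card_ord.
  exact: big1_eq.
rewrite -(big_mkcond P (fun=> n%:R)) sumr_const.
by rewrite -mulrnA mulnC.
Qed.
End Count.

Section Circ.
Variable n : nat.

Definition colc a t : {set sgraph n.+1 * 'I_n.+1} := wlcol t (circ n.+1 a, ord0).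

Lemma circG_proof a : [exists g, isoclass (circ n.+1 a) == isoclass g].
Proof. by apply/existsP; exists (circ n.+1 a). Qed.

Definition circG a : Gn n.+1 := exist _ (isoclass (circ n.+1 a)) (circG_proof a).

Lemma isob_refl (g : sgraph n.+1) : isob g g.
Proof. by apply/existsP; exists 1%g; apply/forallP => u; apply/forallP => v; rewrite !perm1. Qed.

Lemma rep_circ a : exists p : {perm 'I_n.+1},
  forall u v, adj (rep (circG a)) u v = adj (circ n.+1 a) (p u) (p v).
Proof.
have H := xchooseP (existsP (valP (circG a))).
have : circ n.+1 a \in isoclass (rep (circG a)).
  by rewrite -(eqP H) /= inE isob_refl.
rewrite inE => /existsP[p /forallP Hp]; exists p => u v.
by apply/eqP; have /forallP := Hp u; apply.
Qed.

Lemma wlcount_circ a t c :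
  wlcount t (rep (circG a)) c = if c == colc a t then n.+1 else 0%N.
Proof.
have [p Hp] := rep_circ a.
have E : forall v, wlcol t (rep (circG a), v) = colc a t.
  move=> v; rewrite (wlcol_eq (wl_iso Hp t v)) /colc.
  by apply: esym; apply: wlcol_eq; apply: circ_trans.
rewrite /wlcount; under eq_finset do rewrite E.
case: eqP => [->|H].
  rewrite eqxx -[X in _ = X]card_ord -cardsT; apply: eq_card => v.
  by rewrite !inE.
have /negPf -> : c != colc a t by apply/eqP => e; apply: H; rewrite e.
rewrite -(cards0 'I_n.+1); apply: eq_card => v.
by rewrite !inE.
Qed.

Lemma phi_circ (R : realType) T a (i : wloa_index n.+1 T) :
  @phi_wloa R n.+1 T (circG a) i = if (val i).1.2 == colc a (val i).1.1 then 1%R else 0%R.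
Proof.
rewrite /phi_wloa; case: i => [[[t c] k] Hi] /=; rewrite wlcount_circ.
by case: eqP => _; rewrite ?ltn_ord.
Qed.

Lemma colc_Sigma a t : colc a t \in Sigma n.+1 t.
Proof. by apply/imsetP; exists (circ n.+1 a, ord0). Qed.

Lemma colc0 a c : c \in Sigma n.+1 0 -> c = colc a 0.
Proof. by case/imsetP => x _ ->; rewrite /colc; apply/setP => y; rewrite !inE. Qed.

Lemma colc_neq a b t : (a < b)%N -> (a + b < n.+1)%N -> (0 < t)%N -> colc a t != colc b t.
Proof.
move=> Hab Hn Ht; apply/eqP => E.
have : (circ n.+1 b, ord0) \in colc a t by rewrite E inE wl_refl.
rewrite inE => /(wl_one Ht) /wl_deg /=.
by move=> H; have := circ_deg_lt Hab Hn; rewrite H ltnn.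
Qed.
End Circ.

Local Open Scope ring_scope.

Section Geo.
Variable R : realType.
Variable I : finType.

Definition dot (x y : I -> R) := \sum_i x i * y i.

Lemma sqnormE (x : I -> R) : sqnorm x = dot x x.
Proof. by apply: eq_bigr => i _; rewrite expr2. Qed.

Lemma sqnorm_ge0 (x : I -> R) : 0 <= sqnorm x.
Proof. by apply: sumr_ge0 => i _; rewrite sqr_ge0. Qed.

Lemma dot_hull (u : I -> R) (xs : seq (I -> R)) y (v : R) :
  (forall k : 'I_(size xs), dot u (nth (fun _ => 0) xs k) = v) ->
  in_hull xs y -> dot u y = v.
Proof.
move=> Hk [w [w0 [w1 Hy]]].
rewrite /dot (eq_bigr (fun i => \sum_k u i * (w k * nth (fun _ => 0) xs k i))); last first.
  by move=> i _; rewrite Hy mulr_sumr.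
rewrite exchange_big /= -[v]mul1r -w1 mulr_suml; apply: eq_bigr => k _.
rewrite -(Hk k) /dot mulr_sumr; apply: eq_bigr => i _; ring.
Qed.

Variables (M : nat) (N : R) (s : I -> R) (e : 'I_M -> I -> R) (sg : 'I_M -> bool).
Hypothesis horth : forall a b, dot (e a) (e b) = if a == b then N else 0.
Hypothesis hs : forall a, dot (e a) s = 0.

Let sgn (b : bool) : R := if b then -1 else 1.
Let u i := \sum_a sgn (sg a) * e a i.

Lemma dot_e_p b a : dot (e b) (fun i => s i + e a i) = if b == a then N else 0.
Proof.
rewrite /dot (eq_bigr (fun i => e b i * s i + e b i * e a i)); last by move=> i _; ring.
by rewrite big_split /= -/(dot _ _) -/(dot _ _) hs horth add0r.
Qed.

Lemma sum_sel (F : 'I_M -> R) a : \sum_b F b * (if b == a then N else 0) = F a * N.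
Proof.
rewrite (bigD1 a) //= eqxx big1 ?addr0 // => b /negbTE ->; exact: mulr0.
Qed.

Lemma dot_u_gen (x : I -> R) : dot u x = \sum_b sgn (sg b) * dot (e b) x.
Proof.
rewrite /dot /u (eq_bigr (fun i => \sum_b sgn (sg b) * (e b i * x i))); last first.
  by move=> i _; rewrite mulr_suml; apply: eq_bigr => b _; ring.
by rewrite exchange_big /=; apply: eq_bigr => b _; rewrite mulr_sumr.
Qed.

Lemma dot_u_p a : dot u (fun i => s i + e a i) = sgn (sg a) * N.
Proof.
by rewrite dot_u_gen (eq_bigr (fun b => sgn (sg b) * (if b == a then N else 0))) ?sum_sel // => b _; rewrite dot_e_p.
Qed.

Lemma dot_u_u : dot u u = M%:R * N.
Proof.
rewrite dot_u_gen (eq_bigr (fun b => N)) ?sumr_const ?card_ord ?mulr_natl // => b _.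
have -> : dot (e b) u = sgn (sg b) * N.
  rewrite /dot /u (eq_bigr (fun i => \sum_a sgn (sg a) * (e a i * e b i))); last first.
    by move=> i _; rewrite mulr_sumr; apply: eq_bigr => a _; ring.
  rewrite exchange_big /= (eq_bigr (fun a => sgn (sg a) * (if a == b then N else 0))).
    by rewrite sum_sel.
  by move=> a _; rewrite -mulr_sumr -/(dot _ _) horth.
by rewrite mulrA /sgn; case: (sg b); ring.
Qed.

Lemma hull_lb (xs0 xs1 : seq (I -> R)) y0 y1 :
  (0 < M)%N ->
  (forall k : 'I_(size xs0), exists a, sg a = false /\
       forall i, nth (fun _ => 0) xs0 k i = s i + e a i) ->
  (forall k : 'I_(size xs1), exists a, sg a = true /\
       forall i, nth (fun _ => 0) xs1 k i = s i + e a i) ->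
  in_hull xs0 y0 -> in_hull xs1 y1 ->
  4%:R * N / M%:R <= sqnorm (fun i => y0 i - y1 i).
Proof.
move=> HM H0 H1 Hy0 Hy1.
have D0 : dot u y0 = N.
  apply: dot_hull Hy0 => k; have [a [Ha Hk]] := H0 k.
  rewrite (_ : dot u _ = dot u (fun i => s i + e a i)); first by rewrite dot_u_p Ha mul1r.
  by apply: eq_bigr => i _; rewrite Hk.
have D1 : dot u y1 = - N.
  apply: dot_hull Hy1 => k; have [a [Ha Hk]] := H1 k.
  rewrite (_ : dot u _ = dot u (fun i => s i + e a i)); first by rewrite dot_u_p Ha mulN1r.
  by apply: eq_bigr => i _; rewrite Hk.
set z := fun i => y0 i - y1 i.
have Dz : dot u z = 2%:R * N.
  rewrite /dot /z (eq_bigr (fun i => u i * y0 i - u i * y1 i)); last by move=> i _; ring.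
  by rewrite sumrB -!/(dot _ _) D0 D1; ring.
set al : R := 2%:R / M%:R.
have Hpos : 0 <= sqnorm (fun i => z i - al * u i) by apply: sqnorm_ge0.
have E : sqnorm (fun i => z i - al * u i) = sqnorm z - 2%:R * al * dot u z + al ^+ 2 * dot u u.
  rewrite !sqnormE /dot /z (eq_bigr (fun i => ((y0 i - y1 i) * (y0 i - y1 i) - (2%:R * al) * (u i * (y0 i - y1 i))) + al ^+ 2 * (u i * u i))); last by move=> i _; ring.
  by rewrite big_split /= sumrB -!mulr_sumr.
rewrite E Dz dot_u_u in Hpos.
have HM' : (0 : R) < M%:R by rewrite ltr0n.
have : sqnorm z >= 2%:R * al * (2%:R * N) - al ^+ 2 * (M%:R * N) by lra.
rewrite /al => H; apply: le_trans H; rewrite le_eqVlt; apply/orP; left; apply/eqP.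
field; lra.
Qed.
End Geo.

Local Open Scope ring_scope.

Section Up.
Variable R : realType.
Variable I : finType.

Definition sgnb (b : bool) : R := if b then 1 else -1.

Lemma sqnormZ (c : R) (x : I -> R) : sqnorm (fun i => c * x i) = c ^+ 2 * sqnorm x.
Proof. by rewrite /sqnorm mulr_sumr; apply: eq_bigr => i _; ring. Qed.

Lemma sqnormD (x y : I -> R) :
  sqnorm (fun i => x i + y i) = sqnorm x + 2%:R * dot x y + sqnorm y.
Proof.
rewrite /sqnorm /dot mulr_sumr -!big_split /=.
by apply: eq_bigr => i _; ring.
Qed.

Lemma greedy (k : nat) (d : nat -> I -> R) (D : R) :
  (forall j, sqnorm (d j) <= D) ->
  exists eps : nat -> bool,
    sqnorm (fun i => \sum_(0 <= j < k) sgnb (eps j) * d j i) <= k%:R * D.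
Proof.
move=> Hd; elim: k => [|k [eps He]].
  exists (fun _ => true); rewrite mul0r /sqnorm big1 // => i _.
  by rewrite big_geq // expr0n.
set S := fun i => \sum_(0 <= j < k) sgnb (eps j) * d j i.
set b := dot S (d k) <= 0.
exists (fun j => if j == k then b else eps j).
have -> : (fun i => \sum_(0 <= j < k.+1) sgnb (if j == k then b else eps j) * d j i)
   = (fun i => S i + sgnb b * d k i).
  apply: funext => i; rewrite big_nat_recr //= eqxx; congr (_ + _).
  apply: eq_big_nat => j /andP[_ Hj]; by rewrite (ltn_eqF Hj).
rewrite sqnormD sqnormZ.
have Hb : sgnb b * dot S (d k) <= 0.
  rewrite /b /sgnb; case: ifP => H; first by rewrite mul1r.
  by move/negbT: H; rewrite -ltNge => H; lra.
have Hsq : sgnb b ^+ 2 = 1 by rewrite /sgnb; case: (b); rewrite ?expr1n ?sqrrN ?expr1n.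
have -> : dot S (fun i => sgnb b * d k i) = sgnb b * dot S (d k).
  by rewrite /dot mulr_sumr; apply: eq_bigr => i _; ring.
rewrite Hsq mul1r -natr1 mulrDl mul1r.
have := Hd k; lra.
Qed.

Lemma sum_pairs (G : nat -> R) k :
  \sum_(0 <= j < k.*2) G j = \sum_(0 <= j < k) (G j.*2 + G j.*2.+1).
Proof.
elim: k => [|k IH]; first by rewrite !big_geq.
by rewrite doubleS !big_nat_recr //= ?IH ?addrA // -addnn leq_addl.
Qed.


Lemma edist_sq (x y : I -> R) r : edist x y <= r -> sqnorm (fun i => x i - y i) <= r ^+ 2.
Proof.
rewrite /edist /enorm => H.
have q0 := sqnorm_ge0 (fun i => x i - y i).
have s0 := sqrtr_ge0 (sqnorm (fun i => x i - y i)).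
rewrite -(sqr_sqrtr q0); nra.
Qed.

Lemma sq_edist (x y : I -> R) lam : 0 < lam -> 2%:R * lam <= edist x y ->
  4%:R * lam ^+ 2 <= sqnorm (fun i => x i - y i).
Proof.
rewrite /edist /enorm => Hl H.
have q0 := sqnorm_ge0 (fun i => x i - y i).
have s0 := sqrtr_ge0 (sqnorm (fun i => x i - y i)).
rewrite -(sqr_sqrtr q0); nra.
Qed.

Variables (X : finType) (P : X -> I -> R).

Lemma hull_unif (l : seq X) : (0 < size l)%N ->
  in_hull [seq P x | x <- l] (fun i => (size l)%:R^-1 * \sum_(x <- l) P x i).
Proof.
case: l => [|x0 l'] // _; set l := x0 :: l'.
exists (fun _ => (size l)%:R^-1); split; first by move=> k; rewrite invr_ge0 ler0n.
split.
  rewrite sumr_const card_ord size_map -(mulr_natr ((size l)%:R^-1)) mulVf //.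
  by rewrite pnatr_eq0.
move=> i; rewrite -mulr_sumr; congr (_ * _).
rewrite (big_nth x0) big_mkord size_map; apply: eq_bigr => k _.
by rewrite (nth_map x0).
Qed.

Variables (S : {set X}) (r lam : R).
Hypothesis HS : forall (f : X -> bool) (s : seq X), {subset s <= S} ->
  separable r lam [seq (P x, f x) | x <- s].

Lemma shatter_ub : 0 < lam -> (#|S|./2)%:R * lam ^+ 2 <= r ^+ 2.
Proof.
move=> Hlam; set k := #|S|./2.
have [Hk0|Hk0] := posnP k; first by rewrite Hk0 mul0r sqr_ge0.
have HS0 : (0 < #|S|)%N by move: Hk0; rewrite /k; case: #|S|.
have [x0 Hx0] : exists x0, x0 \in S by apply/set0Pn; rewrite -card_gt0.
set xs := enum S.
have Hsz : size xs = #|S| by rewrite cardE.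
have HxS : forall j, nth x0 xs j \in S.
  move=> j; case: (ltnP j (size xs)) => Hj; first by rewrite -mem_enum mem_nth.
  by rewrite nth_default.
have Hk2 : (k.*2 <= size xs)%N by rewrite Hsz /k halfK leq_subr.
have Hxs : {subset xs <= S} by move=> x; rewrite mem_enum.
have [[c Hc] _] := HS (fun _ => false) Hxs.
have Hball : forall x, x \in S -> sqnorm (fun i => P x i - c i) <= r ^+ 2.
  move=> x Hx; apply: edist_sq; apply: (Hc (P x, false)).
  by apply/mapP; exists x; rewrite ?mem_enum.
set d := fun j i => P (nth x0 xs j.*2) i - P (nth x0 xs j.*2.+1) i.
have Hd : forall j, sqnorm (d j) <= 4%:R * r ^+ 2.
  move=> j; set a := nth x0 xs j.*2; set b := nth x0 xs j.*2.+1.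
  have E : 2%:R * sqnorm (fun i => P a i - c i) + 2%:R * sqnorm (fun i => P b i - c i)
         = sqnorm (d j) + sqnorm (fun i => P a i + P b i - 2%:R * c i).
    by rewrite /sqnorm !mulr_sumr -!big_split /=; apply: eq_bigr => i _; rewrite /d; ring.
  have := Hball a (HxS _); have := Hball b (HxS _).
  have := sqnorm_ge0 (fun i => P a i + P b i - 2%:R * c i); lra.
have [eps He] := greedy k Hd.
set f := fun x => let j := index x xs in if odd j then ~~ eps j./2 else eps j./2.
set s := take k.*2 xs.
have Hs : {subset s <= S} by move=> x /mem_take; rewrite mem_enum.
have [_ Hsep] := HS f Hs.
have Hsum : forall G : X -> R, \sum_(x <- s) G x = \sum_(0 <= j < k.*2) G (nth x0 xs j).
  move=> G; rewrite (big_nth x0) size_takel //; apply: eq_big_nat => j /andP[_ Hj].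
  by rewrite nth_take.
have Hf : forall j, (j < k.*2)%N -> f (nth x0 xs j) = if odd j then ~~ eps j./2 else eps j./2.
  move=> j Hj; rewrite /f index_uniq ?enum_uniq //; exact: leq_trans Hj Hk2.
have Hodd1 : forall j, odd j.*2.+1 = true by move=> j; rewrite /= odd_double.
have Hhalf1 : forall j, j.*2.+1./2 = j by move=> j; rewrite -[j.*2.+1]/(true + j.*2)%N half_bit_double.
have Hsum2 : forall G : X -> R, \sum_(x <- s) G x =
   \sum_(0 <= j < k) (G (nth x0 xs j.*2) + G (nth x0 xs j.*2.+1)).
  by move=> G; rewrite Hsum sum_pairs.
have Hcnt : forall b : bool, (count (fun x => f x == b) s)%:R = k%:R :> R.
  move=> b; rewrite -sum1_count natr_sum big_mkcond /=.
  rewrite (Hsum (fun x => if f x == b then 1%:R else 0)).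
  rewrite sum_pairs (eq_big_nat _ _ (F2 := fun _ => 1)).
    by rewrite sumr_const_nat subn0.
  move=> j /andP[_ Hj].
  rewrite !Hf ?odd_double ?Hodd1 ?half_double ?Hhalf1 //=; first by case: (eps j); case: b => /=; rewrite ?addr0 ?add0r.
    by rewrite -!muln2; lia.
  by rewrite ltn_double.
set lpos := [seq x <- s | f x]; set lneg := [seq x <- s | ~~ f x].
have Hszp : size lpos = k.
  have : (size lpos)%:R = k%:R :> R.
    by rewrite size_filter -(Hcnt true); congr (_%:R); apply: eq_count => x; case: (f x).
  by move/eqP; rewrite eqr_nat => /eqP.
have Hszn : size lneg = k.
  have : (size lneg)%:R = k%:R :> R.
    by rewrite size_filter -(Hcnt false); congr (_%:R); apply: eq_count => x; case: (f x).
  by move/eqP; rewrite eqr_nat => /eqP.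
have Hp := hull_unif (l := lpos); rewrite Hszp in Hp; have {}Hp := Hp Hk0.
have Hn := hull_unif (l := lneg); rewrite Hszn in Hn; have {}Hn := Hn Hk0.
have Epos : [seq p.1 | p <- [seq (P x, f x) | x <- s] & p.2] = [seq P x | x <- lpos].
  by rewrite filter_map -map_comp.
have Eneg : [seq p.1 | p <- [seq (P x, f x) | x <- s] & ~~ p.2] = [seq P x | x <- lneg].
  by rewrite filter_map -map_comp.
rewrite -Epos in Hp; rewrite -Eneg in Hn.
have H4 := sq_edist Hlam (Hsep _ _ Hn Hp).
set V := fun i => \sum_(0 <= j < k) sgnb (eps j) * d j i.
have HV : forall i, \sum_(x <- lpos) P x i - \sum_(x <- lneg) P x i = V i.
  move=> i; rewrite !big_filter big_mkcond [X in _ - X]big_mkcond /= -sumrB.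
  rewrite Hsum2.
  apply: eq_big_nat => j /andP[_ Hj].
  rewrite !Hf ?odd_double ?Hodd1 ?half_double ?Hhalf1 //=.
    by rewrite /d /sgnb; case: (eps j) => /=; ring.
    by rewrite -!muln2; lia.
  by rewrite ltn_double.
have EV : (fun i => k%:R^-1 * \sum_(x <- lneg) P x i - k%:R^-1 * \sum_(x <- lpos) P x i)
   = (fun i => (- k%:R^-1) * V i).
  by apply: funext => i; rewrite -HV; ring.
rewrite EV sqnormZ in H4.
have Kp : (0 : R) < k%:R by rewrite ltr0n.
have H5 : (- k%:R^-1) ^+ 2 * sqnorm V <= (k%:R^-1) ^+ 2 * (k%:R * (4%:R * r ^+ 2)).
  by rewrite sqrrN; apply: ler_wpM2l => //; apply: sqr_ge0.
have E6 : (k%:R^-1) ^+ 2 * (k%:R * (4%:R * r ^+ 2)) = (4%:R * r ^+ 2) / k%:R.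
  by field; lra.
rewrite E6 in H5; have H7 := le_trans H4 H5.
rewrite ler_pdivlMr // in H7; lra.
Qed.

End Up.

Local Open Scope ring_scope.

Section Low.
Variable R : realType.
Variables (X I : finType) (emb : X -> I -> R) (E : (X -> I -> R) -> Prop).
Hypothesis HE : E emb.
Variables (M : nat) (G : 'I_M -> X) (s : I -> R) (e : 'I_M -> I -> R) (N r lam : R).
Hypothesis horth : forall a b, dot (e a) (e b) = if a == b then N else 0.
Hypothesis hs : forall a, dot (e a) s = 0.
Hypothesis HM : (0 < M)%N.
Hypothesis Hrep : forall a i, emb (G a) i = s i + e a i.
Hypothesis Hball : forall a, edist (emb (G a)) (fun _ => 0) <= r.
Hypothesis Hlam : 0 < lam.
Hypothesis Hmar : 4%:R * lam ^+ 2 <= 4%:R * N / M%:R.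
Hypothesis Ginj : injective G.

Lemma sqrt_lb (q : R) : 4%:R * lam ^+ 2 <= q -> 2%:R * lam <= Num.sqrt q.
Proof.
move=> H; have -> : 2%:R * lam = Num.sqrt ((2%:R * lam) ^+ 2).
  by rewrite sqrtr_sqr ger0_norm //; apply: mulr_ge0 => //; apply: ltW.
apply: ler_wsqrtr; rewrite exprMn; move: H; rewrite -[(2%:R : R) ^+ 2]/((2%:R : R) * 2%:R).
have -> : (2%:R : R) * 2%:R = 4%:R by rewrite -natrM.
by [].
Qed.

Lemma lower_gen : (M <= VCdim (Hclass E r lam))%N.
Proof.
set S := [set G a | a : 'I_M].
have HSc : #|S| = M by rewrite card_imset // card_ord.
rewrite -HSc /VCdim; apply: (@leq_bigmax_cond _ (fun S => `[< shattered (Hclass E r lam) S >]) (fun S => #|S|)).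
apply/asboolP => f.
set h := fun x => if x \in S then Some (f x) else None.
exists h; split; last by move=> x Hx; rewrite /h Hx.
move=> l Hl; exists emb; split => //.
have HlS : forall x, x \in l -> exists a, x = G a.
  move=> x Hx; have := Hl x Hx; rewrite /h; case: ifP => // /imsetP[a _ ->] _.
  by exists a.
have HL : forall x, x \in l -> odflt false (h x) = f x.
  by move=> x Hx; have [a ->] := HlS x Hx; rewrite /h imset_f.
split.
  exists (fun _ => 0) => p /mapP[x Hx ->] /=.
  by have [a ->] := HlS x Hx; apply: Hball.
move=> y0 y1 Hy0 Hy1.
have x0 : X := G (Ordinal HM).
rewrite filter_map -map_comp in Hy0; rewrite filter_map -map_comp in Hy1.
apply: sqrt_lb; apply: le_trans Hmar _.
apply: (@hull_lb R I M N s e (fun a => f (G a)) horth hs _ _ _ _ HM _ _ Hy0 Hy1).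
  move=> k; set l' := [seq x <- l | _].
  have Hk : (nat_of_ord k < size l')%N by apply: leq_trans (ltn_ord k) _; rewrite size_map.
  have : nth x0 l' k \in l' by apply: mem_nth.
  rewrite mem_filter => /andP[/= HL' Hxl].
  have [a Ha] := HlS _ Hxl; exists a; split.
    by move: HL'; rewrite HL // -Ha => /negbTE.
  by move=> i; rewrite (nth_map x0) //= Ha Hrep.
move=> k; set l' := [seq x <- l | _].
have Hk : (nat_of_ord k < size l')%N by apply: leq_trans (ltn_ord k) _; rewrite size_map.
have : nth x0 l' k \in l' by apply: mem_nth.
rewrite mem_filter => /andP[/= HL' Hxl].
have [a Ha] := HlS _ Hxl; exists a; split.
  by move: HL'; rewrite HL // -Ha.
by move=> i; rewrite (nth_map x0) //= Ha Hrep.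
Qed.
End Low.

Local Open Scope ring_scope.

Section Conc.
Variables (R : realType) (n T : nat).

Definition sv (i : wloa_index n.+1 T) : R :=
  if (nat_of_ord (val i).1.1 == 0)%N then 1 else 0.
Definition ev (a : nat) (i : wloa_index n.+1 T) : R :=
  if ((nat_of_ord (val i).1.1 != 0)%N && ((val i).1.2 == colc n a (val i).1.1)) then 1 else 0.

Lemma phi_rep a i : @phi_wloa R n.+1 T (circG n a) i = sv i + ev a i.
Proof.
rewrite phi_circ /sv /ev; case: i => [[[t c] k] Hi] /=.
case Et: (nat_of_ord t == 0%N) => /=; last by rewrite add0r.
move/eqP: Et => Ht.
have Hc : c = colc n a 0 by apply: colc0; move: Hi; rewrite /= Ht.
by rewrite Hc Ht eqxx /= addr0.
Qed.

Lemma ev_s a : dot (ev a) sv = 0.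
Proof.
by apply: big1 => i _; rewrite /ev /sv; case: eqP => _ /=; rewrite ?mulr0 ?andbF ?mul0r.
Qed.

Lemma card_nz : #|[pred t : 'I_T.+1 | (nat_of_ord t != 0)%N]| = T.
Proof.
rewrite -[T]/(T.+1.-1) -[in RHS](card_ord T.+1) -(cardC1 ord0).
by apply: eq_card => t; rewrite !inE.
Qed.

Lemma ev_orth a b : (a + b < n.+1)%N ->
  dot (ev a) (ev b) = if a == b then (T * n.+1)%:R else 0.
Proof.
move=> Hab; case: eqP => [<-|Hne].
  rewrite /dot (eq_bigr (fun i => ev a i)); last by move=> i _; rewrite /ev; case: ifP; rewrite ?mulr1 ?mulr0.
  have HC := @count_col R n.+1 T (fun t => colc n a t) (fun t : 'I_T.+1 => (nat_of_ord t != 0)%N) (fun t => colc_Sigma n a t).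
  simpl in HC; rewrite /ev HC; congr ((_ * _)%:R).
  by rewrite -[RHS]card_nz; apply: eq_card.
apply: big1 => i _; rewrite /ev.
case: ifP => [/andP[Ht /eqP Ha]|]; last by rewrite mul0r.
case: ifP => [/andP[_ /eqP Hb]|]; last by rewrite mulr0.
exfalso; move: Ha Hb => -> Hb.
have Ht' : (0 < (val i).1.1)%N by rewrite lt0n.
case: (ltngtP a b) => [lt|lt|eq] //.
  by move: (colc_neq lt Hab Ht'); rewrite Hb eqxx.
have Hba : (b + a < n.+1)%N by rewrite addnC.
by move: (colc_neq lt Hba Ht'); rewrite Hb eqxx.
Qed.
End Conc.

Local Open Scope ring_scope.

Lemma dotZ (R : realType) (I : finType) (k : R) (x y : I -> R) :
  dot (fun i => k * x i) (fun i => k * y i) = k ^+ 2 * dot x y.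
Proof. by rewrite /dot mulr_sumr; apply: eq_bigr => i _; ring. Qed.

Section LC.
Variables (R : realType) (n T : nat).
Hypothesis HT : (0 < T)%N.
Variables (emb : Gn n.+1 -> wloa_index n.+1 T -> R) (E : (Gn n.+1 -> wloa_index n.+1 T -> R) -> Prop).
Hypothesis HE : E emb.
Variable k : R.
Hypothesis Hk : 0 < k.
Hypothesis Hemb : forall a i, emb (circG n a) i = k * @phi_wloa R n.+1 T (circG n a) i.
Variables (r lam : R) (M : nat).
Hypothesis Hlam : 0 < lam.
Hypothesis HM : (0 < M)%N.
Hypothesis H2M : (M.*2 <= n.+1)%N.
Hypothesis Hball : forall a, edist (emb (circG n a)) (fun _ => 0) <= r.
Hypothesis Hmar : M%:R * lam ^+ 2 <= k ^+ 2 * (T * n.+1)%:R.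

Lemma lower_conc : (M <= VCdim (Hclass E r lam))%N.
Proof.
have Hab : forall a b : 'I_M, (a + b < n.+1)%N.
  move=> a b; have := ltn_ord a; have := ltn_ord b; have := H2M; rewrite -addnn; lia.
apply: (@lower_gen R _ _ emb E HE M (fun a => circG n (val a))
          (fun i => k * @sv R n T i) (fun a i => k * @ev R n T a i) (k ^+ 2 * (T * n.+1)%:R) r lam).
- move=> a b; rewrite dotZ ev_orth //.
  by rewrite val_eqE; case: eqP; rewrite ?mulr0.
- by move=> a; rewrite dotZ ev_s mulr0.
- exact: HM.
- by move=> a i; rewrite Hemb phi_rep mulrDr.
- exact: Hball.
- exact: Hlam.
- have HM' : (0 : R) < M%:R by rewrite ltr0n.
  rewrite ler_pdivlMr // -mulrA [lam ^+ 2 * _]mulrC; apply: ler_wpM2l => //.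
- move=> a b Eab; apply/eqP; apply: contraT => Hne.
  have He : forall i, @ev R n T a i = @ev R n T b i.
    move=> i; have := @phi_rep R n T a i; rewrite Eab phi_rep => /addrI.
    by [].
  have := @ev_orth R n T a b (Hab a b); rewrite val_eqE (negbTE Hne).
  rewrite /dot (eq_bigr (fun i => @ev R n T a i * @ev R n T a i)); last by move=> i _; rewrite He.
  rewrite -/(dot _ _) ev_orth ?eqxx; last by have := Hab a a.
  by move/eqP; rewrite pnatr_eq0 muln_eq0 => /orP[/eqP HT0|//]; move: HT; rewrite HT0.
Qed.
End LC.

Local Open Scope ring_scope.

Lemma upper_gen (R : realType) (X I : finType) (P : X -> I -> R)
  (E : (X -> I -> R) -> Prop) (HE : forall emb, E emb -> emb = P) (r lam : R) :
  0 < lam -> (VCdim (Hclass E r lam))%:R <= 2%:R * (r ^+ 2 / lam ^+ 2) + 1.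
Proof.
move=> Hlam.
have Q0 : 0 <= r ^+ 2 / lam ^+ 2 by apply: divr_ge0; apply: sqr_ge0.
rewrite /VCdim; apply: (big_ind (fun v : nat => v%:R <= 2%:R * (r ^+ 2 / lam ^+ 2) + 1)).
- rewrite /=; lra.
- by move=> x y Hx Hy; rewrite /maxn; case: ifP.
move=> S /asboolP Hsh.
have HS : forall (f : X -> bool) (s : seq X), {subset s <= S} ->
    separable r lam [seq (P x, f x) | x <- s].
  move=> f s Hs; have [h [Hh HhS]] := Hsh f.
  have Hnn : forall x, x \in s -> h x != None by move=> x Hx; rewrite HhS ?Hs.
  have [emb [/HE -> Hsep]] := Hh s Hnn.
  suff -> : [seq (P x, f x) | x <- s] = [seq (P x, odflt false (h x)) | x <- s] by [].
  by apply/eq_in_map => x Hx; rewrite HhS ?Hs.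
have Hub := shatter_ub HS Hlam.
have Hl2 : (0 : R) < lam ^+ 2 by apply: exprn_gt0.
have Hk : (#|S|./2)%:R <= r ^+ 2 / lam ^+ 2 by rewrite ler_pdivlMr.
rewrite -{1}(odd_double_half #|S|) natrD -muln2 natrM.
have : ((odd #|S|)%:R : R) <= 1 by case: (odd #|S|); rewrite ?ler01 ?lexx.
lra.
Qed.

Import Num.Def.
Local Open Scope ring_scope.

Lemma sqnorm_phi (R : realType) n T a :
  sqnorm (@phi_wloa R n.+1 T (circG n a)) = ((T.+1) * n.+1)%:R.
Proof.
have HC := @count_col R n.+1 T (fun t => colc n a t) xpredT (fun t => colc_Sigma n a t).
simpl in HC; rewrite card_ord in HC; rewrite -HC.
by apply: eq_bigr => i _; rewrite phi_circ; case: ifP; rewrite ?expr1n ?expr0n.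
Qed.

Lemma sqnorm_sub0 (R : realType) (I : finType) (x : I -> R) :
  sqnorm (fun i => x i - 0) = sqnorm x.
Proof. by apply: eq_bigr => i _; rewrite subr0. Qed.

Lemma trunc_facts (R : realType) (x : R) : 0 <= x ->
  (truncn x)%:R <= x /\ x < (truncn x)%:R + 1.
Proof.
move=> Hx; split; first by rewrite truncn_le.
by have := truncnS_gt x; rewrite -natr1.
Qed.

Unset Implicit Arguments.
Theorem proposition6 (R : realType) :
  (exists c1 c2 K : R, 0 < c1 /\ 0 < c2 /\
     forall (T n : nat) (lam : R), (0 < T)%N -> (0 < n)%N -> 0 < lam ->
       let r := Num.sqrt ((T + 1)%:R * n%:R) in
       r ^+ 2 / lam ^+ 2 <= n%:R -> K <= r ^+ 2 / lam ^+ 2 ->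
       c1 * (r ^+ 2 / lam ^+ 2) <= (VCdim (Hclass (@E_WLOA R n T) r lam))%:R
       /\ (VCdim (Hclass (@E_WLOA R n T) r lam))%:R <= c2 * (r ^+ 2 / lam ^+ 2))
  /\
  (exists c1 c2 K : R, 0 < c1 /\ 0 < c2 /\
     forall (T n : nat) (lam : R), (0 < T)%N -> (0 < n)%N -> 0 < lam ->
       let r := Num.sqrt (T%:R / (T + 1)%:R) in
       r ^+ 2 / lam ^+ 2 <= n%:R -> K <= 1 / lam ^+ 2 ->
       c1 * (1 / lam ^+ 2) <= (VCdim (Hclass (@Ebar_WLOA R n T) 1 lam))%:R
       /\ (VCdim (Hclass (@Ebar_WLOA R n T) 1 lam))%:R <= c2 * (1 / lam ^+ 2)).
Proof.
split.
- exists (1/4), 3, 4; split; first lra; split; first lra.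
  move=> T [|n] lam HT // _ Hlam r HQn HK.
  have Hl2 : (0 : R) < lam ^+ 2 by apply: exprn_gt0.
  have HT1 : (1 : R) <= T%:R by rewrite ler1n.
  have Hr2 : r ^+ 2 = (T%:R + 1) * n.+1%:R.
    by rewrite /r sqr_sqrtr natrD // mulr_ge0 // addr_ge0.
  set Q := r ^+ 2 / lam ^+ 2 in HQn HK *.
  split; last first.
    have := @upper_gen R _ _ (@phi_wloa R n.+1 T) (@E_WLOA R n.+1 T) (fun emb H => H) r lam Hlam.
    rewrite -/Q; lra.
  have [Hle Hgt] := trunc_facts (x := Q / 2) (ltac:(lra)).
  set M := truncn (Q / 2) in Hle Hgt.
  have HM : (0 < M)%N by rewrite -(ltr0n R); lra.
  have H2M : (M.*2 <= n.+1)%N by rewrite -(ler_nat R) -muln2 natrM; lra.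
  have Hmar : M%:R * lam ^+ 2 <= 1 ^+ 2 * (T * n.+1)%:R.
    rewrite expr1n mul1r natrM.
    have E1 : Q / 2 * lam ^+ 2 = r ^+ 2 / 2 by rewrite /Q; field; lra.
    have : M%:R * lam ^+ 2 <= Q / 2 * lam ^+ 2 by apply: ler_wpM2r => //; lra.
    rewrite E1 Hr2 => H.
    have Hn0 : (0 : R) <= n.+1%:R by [].
    nra.
  have Hball : forall a, edist (@phi_wloa R n.+1 T (circG n a)) (fun _ => 0) <= r.
    move=> a; rewrite /edist /enorm sqnorm_sub0 sqnorm_phi /r natrM natrD -natr1.
    by [].
  have HL := @lower_conc R n T HT (@phi_wloa R n.+1 T) (@E_WLOA R n.+1 T) erefl 1 ltr01
     (fun a i => esym (mul1r _)) r lam M Hlam HM H2M Hball Hmar.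
  rewrite -(ler_nat R) in HL; lra.
- exists (1/8), 3, 8; split; first lra; split; first lra.
  move=> T [|n] lam HT // _ Hlam r HQn HK.
  have Hl2 : (0 : R) < lam ^+ 2 by apply: exprn_gt0.
  have HT1 : (1 : R) <= T%:R by rewrite ler1n.
  have Hr2 : r ^+ 2 = T%:R / (T%:R + 1).
    by rewrite /r sqr_sqrtr natrD // divr_ge0 // addr_ge0.
  have Hr2h : 1 / 2 <= r ^+ 2 by rewrite Hr2 ler_pdivlMr; lra.
  set Q := 1 / lam ^+ 2 in HK *.
  have HQr : r ^+ 2 / lam ^+ 2 = r ^+ 2 * Q by rewrite /Q; field; lra.
  split; last first.
    have := @upper_gen R _ _ (@phi_wloa_norm R n.+1 T) (@Ebar_WLOA R n.+1 T) (fun emb H => H) 1 lam Hlam.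
    rewrite expr1n -/Q; lra.
  have Q0 : 0 <= Q by lra.
  have Hle2 : Q / 2 <= r ^+ 2 * Q by nra.
  have [Hle Hgt] := trunc_facts (x := r ^+ 2 * Q / 2) (ltac:(nra)).
  set M := truncn (r ^+ 2 * Q / 2) in Hle Hgt.
  have HM : (0 < M)%N by rewrite -(ltr0n R); nra.
  have H2M : (M.*2 <= n.+1)%N by rewrite -(ler_nat R) -muln2 natrM; nra.
  set nu := Num.sqrt (((T.+1) * n.+1)%:R : R).
  have Hnu2 : nu ^+ 2 = (T%:R + 1) * n.+1%:R by rewrite /nu sqr_sqrtr // natrM -natr1.
  have Hnu : 0 < nu by rewrite /nu sqrtr_gt0 ltr0n muln_gt0.
  have Hemb : forall a i, @phi_wloa_norm R n.+1 T (circG n a) i = nu^-1 * @phi_wloa R n.+1 T (circG n a) i.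
    by move=> a i; rewrite /phi_wloa_norm /enorm sqnorm_phi mulrC.
  have Hball : forall a, edist (@phi_wloa_norm R n.+1 T (circG n a)) (fun _ => 0) <= 1.
    move=> a; rewrite /edist /enorm sqnorm_sub0.
    rewrite (_ : sqnorm _ = nu^-1 ^+ 2 * sqnorm (@phi_wloa R n.+1 T (circG n a))); last first.
      by rewrite -sqnormZ; apply: eq_bigr => i _; rewrite Hemb.
    rewrite sqnorm_phi (_ : _ * _ = 1) ?sqrtr1 //.
    by rewrite -[X in _ * X](sqr_sqrtr (ler0n _ _)) -/nu exprVn mulVf // expf_neq0 // gt_eqF.
  have Hmar : M%:R * lam ^+ 2 <= nu^-1 ^+ 2 * (T * n.+1)%:R.
    have E1 : nu^-1 ^+ 2 * (T * n.+1)%:R = r ^+ 2.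
      rewrite exprVn Hnu2 Hr2 natrM; field.
      by apply/andP; split; rewrite gt_eqF //; lra.
    rewrite E1.
    have E2 : r ^+ 2 * Q / 2 * lam ^+ 2 = r ^+ 2 / 2 by rewrite /Q; field; lra.
    have : M%:R * lam ^+ 2 <= r ^+ 2 * Q / 2 * lam ^+ 2 by apply: ler_wpM2r => //; lra.
    rewrite E2; lra.
  have HL := @lower_conc R n T HT (@phi_wloa_norm R n.+1 T) (@Ebar_WLOA R n.+1 T) erefl (nu^-1)
     (ltac:(by rewrite invr_gt0)) Hemb 1 lam M Hlam HM H2M Hball Hmar.
  rewrite -(ler_nat R) in HL; nra.
Qed.
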